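(* Let $\mathbf C$ be an admissible category of coframes. There is an identity-on-morphisms functor $(L,\nu_L)\mapsto(L,C_{\nu_L})$ from $\mathbf C^{\mathrm{adh}}$ to $\mathbf C^{\mathrm{top}}$, which is right adjoint to the identity-on-morphisms functor $(L,C)\mapsto(L,\nu_C)$ from $\mathbf C^{\mathrm{top}}$ to $\mathbf C^{\mathrm{adh}}$.
   Context: A category of coframes has coframes as objects and coframe morphisms (preserving arbitrary infima and finite suprema); it is admissible if every powerset is an object and there are classes of index sets $\mathcal I,\mathcal J$ with morphisms exactly the monotone maps preserving existing $I$-indexed infima ($I\in\mathcal I$) and $J$-indexed suprema ($J\in\mathcal J$). Each coframe morphism $\varphi$ has a left adjoint $\varphi_!$. $\mathcal C_L$ is the set of complemented elements of $L$. An adherence structure on $L$ is a monotone $\nu:L\to L$ preserving finite suprema of complemented elements with $\nu(\ell)=\bigwedge\{\nu(a):a\in\mathcal C_L,a\ge\ell\}$; $\mathbf C^{\mathrm{adh}}$ has objects $(L,\nu_L)$ and morphisms the $\mathbf C$-morphisms $\varphi:L\to L'$ with $\nu_{L'}(\ell')\le\varphi(\nu_L(\varphi_!(\ell')))$ for all $\ell'$. A topological $\mathbf C$-object is $(L,C(L))$ with $C(L)$ a sublattice of $L$ consisting of complemented elements (its closed elements); $\mathbf C^{\mathrm{top}}$ has as morphisms the $\mathbf C$-morphisms $\varphi$ with $\varphi(C(L))\subseteq C(L')$. For an adherence structure $\nu$, $C_\nu=\{c\in\mathcal C_L:\nu(c)\le c\}$; for a topological structure $C$, $\nu_C(\ell)=\bigwedge\{c\in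 C:c\ge\ell\}$. *)

(* Defs.v *)
Set Implicit Arguments.
Unset Strict Implicit.

Record CLat := {
  car :> Type;
  le : car -> car -> Prop;
  inf : (car -> Prop) -> car;
  le_refl : forall x, le x x;
  le_trans : forall x y z, le x y -> le y z -> le x z;
  le_antisym : forall x y, le x y -> le y x -> x = y;
  inf_lb : forall (S : car -> Prop) x, S x -> le (inf S) x;
  inf_glb : forall (S : car -> Prop) y, (forall x, S x -> le y x) -> le y (inf S)
}.
Arguments le {c} _ _.
Arguments inf {c} _.

Section Ops.
Variable L : CLat.
Definition sup (S : L -> Prop) : L := inf (fun y => forall x, S x -> le x y).
Definition meet (a b : L) : L := inf (fun x => x = a \/ x = b).
Definition join (a b : L) : L := sup (fun x => x = a \/ x = b).
Definition top : L := inf (fun _ => False).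
Definition bot : L := sup (fun _ => False).
Definition iinf (I : Type) (g : I -> L) : L := inf (fun x => exists i, x = g i).
Definition isup (I : Type) (g : I -> L) : L := sup (fun x => exists i, x = g i).
Definition complemented (a : L) : Prop :=
  exists b, meet a b = bot /\ join a b = top.
End Ops.
Arguments top {L}.
Arguments bot {L}.

Definition coframe_law (L : CLat) : Prop :=
  forall (a : L) (S : L -> Prop),
    join a (inf S) = inf (fun x => exists s, S s /\ x = join a s).

Record Coframe := { cf :> CLat; cf_law : coframe_law cf }.

Definition coframe_mor (L L' : Coframe) (f : L -> L') : Prop :=
  (forall S : L -> Prop, f (inf S) = inf (fun y => exists x, S x /\ y = f x)) /\
  f bot = bot /\ (forall a b, f (join a b) = join (f a) (f b)).

Definition lower_adj (L L' : Coframe) (f : L -> L') (l' : L') : L :=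
  inf (fun l => le l' (f l)).

(** ** An admissible category C of coframes, described by
    - Ob : the class of its objects (coframes),
    - II, JJ : the classes of index sets;
    a C-morphism L -> L' (L, L' objects) is exactly a monotone map preserving
    the (existing) I-indexed infima (I in II) and J-indexed suprema (J in JJ). *)
Definition is_Cmor (II JJ : Type -> Prop) (L L' : Coframe) (f : L -> L') : Prop :=
  (forall a b, le a b -> le (f a) (f b)) /\
  (forall (I : Type), II I -> forall g : I -> L, f (iinf g) = iinf (fun i => f (g i))) /\
  (forall (J : Type), JJ J -> forall g : J -> L, f (isup g) = isup (fun j => f (g j))).

Definition iso_powerset (L : Coframe) (X : Type) : Prop :=
  exists (e : L -> (X -> Prop)) (e' : (X -> Prop) -> L),
    (forall a, e' (e a) = a) /\ (forall A, e (e' A) = A) /\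
    (forall a b, le a b <-> (forall x, e a x -> e b x)).

Definition admissible (Ob : Coframe -> Prop) (II JJ : Type -> Prop) : Prop :=
  (forall (L L' : Coframe) (f : L -> L'),
      Ob L -> Ob L' -> is_Cmor II JJ f -> coframe_mor f) /\
  (forall X : Type, exists L, Ob L /\ iso_powerset L X).

Definition adherence (L : Coframe) (nu : L -> L) : Prop :=
  (forall a b, le a b -> le (nu a) (nu b)) /\
  nu bot = bot /\
  (forall a b, complemented a -> complemented b -> nu (join a b) = join (nu a) (nu b)) /\
  (forall l, nu l = inf (fun y => exists a, complemented a /\ le l a /\ y = nu a)).

Definition adh_mor (II JJ : Type -> Prop) (L L' : Coframe)
    (nu : L -> L) (nu' : L' -> L') (f : L -> L') : Prop :=
  is_Cmor II JJ f /\ (forall l', le (nu' l') (f (nu (lower_adj f l')))).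

Definition topological (L : Coframe) (C : L -> Prop) : Prop :=
  (forall c, C c -> complemented c) /\
  C bot /\ C top /\
  (forall a b, C a -> C b -> C (join a b)) /\
  (forall a b, C a -> C b -> C (meet a b)).

Definition top_mor (II JJ : Type -> Prop) (L L' : Coframe)
    (C : L -> Prop) (C' : L' -> Prop) (f : L -> L') : Prop :=
  is_Cmor II JJ f /\ (forall c, C c -> C' (f c)).

Definition C_of (L : Coframe) (nu : L -> L) : L -> Prop :=
  fun c => complemented c /\ le (nu c) c.

Definition nu_of (L : Coframe) (C : L -> Prop) : L -> L :=
  fun l => inf (fun c => C c /\ le l c).

(* Main.v *)
Require Import Defs.

Section Lat.
Variable L : CLat.
Implicit Types x y z : L.

Lemma inf_ext (S T : L -> Prop) : (forall x, S x <-> T x) -> inf S = inf T.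
Proof.
  intro H. apply le_antisym; apply inf_glb; intros x Hx; apply inf_lb; apply H; auto.
Qed.

Lemma bot_le x : le (@bot L) x.
Proof. unfold bot, sup. apply inf_lb. intros y []. Qed.

Lemma le_top x : le x (@top L).
Proof. unfold top. apply inf_glb. intros y []. Qed.

Lemma meet_l x y : le (meet x y) x.
Proof. apply inf_lb. auto. Qed.
Lemma meet_r x y : le (meet x y) y.
Proof. apply inf_lb. auto. Qed.
Lemma meet_glb x y z : le z x -> le z y -> le z (meet x y).
Proof. intros. apply inf_glb. intros w [->| ->]; auto. Qed.
Lemma join_l x y : le x (join x y).
Proof. apply inf_glb. intros w Hw. apply Hw. auto. Qed.
Lemma join_r x y : le y (join x y).
Proof. apply inf_glb. intros w Hw. apply Hw. auto. Qed.
Lemma join_lub x y z : le x z -> le y z -> le (join x y) z.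
Proof. intros. apply inf_lb. intros w [->| ->]; auto. Qed.

Lemma join_comm x y : join x y = join y x.
Proof. apply le_antisym; apply join_lub; auto using join_l, join_r. Qed.
Lemma meet_comm x y : meet x y = meet y x.
Proof. apply le_antisym; apply meet_glb; auto using meet_l, meet_r. Qed.

Lemma meet_mono x y x' y' : le x x' -> le y y' -> le (meet x y) (meet x' y').
Proof. intros. apply meet_glb; eapply le_trans; [apply meet_l|auto|apply meet_r|auto]. Qed.
Lemma join_mono x y x' y' : le x x' -> le y y' -> le (join x y) (join x' y').
Proof. intros. apply join_lub; eapply le_trans; [eauto|apply join_l|eauto|apply join_r]. Qed.
End Lat.

Section CF.
Variable L : Coframe.
Implicit Types x y z : L.

Lemma distrib_le (p q r : L) : le (meet (join p q) (join p r)) (join p (meet q r)).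
Proof.
  unfold meet at 2. rewrite (@cf_law L). apply inf_glb.
  intros w [s [[-> | ->] ->]]; [apply meet_l | apply meet_r].
Qed.

Lemma distrib2 x y z : le (meet x (join y z)) (join (meet x y) (meet x z)).
Proof.
  eapply le_trans. 2: apply distrib_le.
  eapply le_trans. 2: { apply meet_mono. apply join_r. apply le_refl. }
  eapply le_trans. 2: { apply meet_mono. apply le_refl. rewrite join_comm. apply distrib_le. }
  apply meet_glb. apply meet_l. apply meet_glb.
  eapply le_trans. apply meet_l. apply join_r.
  eapply le_trans. apply meet_r. rewrite join_comm. apply le_refl.
Qed.

Lemma compl_meet_bot (a a' : L) : meet a a' = bot -> le (meet a' a) (@bot L).
Proof. intro H. rewrite meet_comm, H. apply le_refl. Qed.

Lemma le_bot_eq x : le x (@bot L) -> x = bot.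
Proof. intro. apply le_antisym; auto using bot_le. Qed.
Lemma top_le_eq x : le (@top L) x -> x = top.
Proof. intro. apply le_antisym; auto using le_top. Qed.

Lemma compl_bot : complemented (@bot L).
Proof.
  exists top. split. apply le_bot_eq, meet_l. apply top_le_eq, join_r.
Qed.
Lemma compl_top : complemented (@top L).
Proof.
  exists bot. split. apply le_bot_eq, meet_r. apply top_le_eq, join_l.
Qed.

Lemma compl_join (a b : L) : complemented a -> complemented b -> complemented (join a b).
Proof.
  intros [a' [Ha1 Ha2]] [b' [Hb1 Hb2]]. exists (meet a' b'). split.
  - apply le_bot_eq. rewrite meet_comm.
    eapply le_trans. apply distrib2.
    apply join_lub.
    + eapply le_trans. 2: apply (compl_meet_bot _ _ Ha1). apply meet_mono. apply meet_l. apply le_refl.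
    + eapply le_trans. 2: apply (compl_meet_bot _ _ Hb1). apply meet_mono. apply meet_r. apply le_refl.
  - apply top_le_eq. unfold meet. rewrite (@cf_law L). apply inf_glb.
    intros w [s [[-> | ->] ->]].
    + rewrite <- Ha2. apply join_mono. apply join_l. apply le_refl.
    + rewrite <- Hb2. apply join_lub. eapply le_trans. 2: apply join_l. apply join_r.
      apply join_r.
Qed.

Lemma compl_meet (a b : L) : complemented a -> complemented b -> complemented (meet a b).
Proof.
  intros [a' [Ha1 Ha2]] [b' [Hb1 Hb2]]. exists (join a' b'). split.
  - apply le_bot_eq.
    eapply le_trans. apply distrib2.
    apply join_lub.
    + rewrite <- Ha1. apply meet_glb. eapply le_trans. apply meet_l. apply meet_l. apply meet_r.
    + rewrite <- Hb1. apply meet_glb. eapply le_trans. apply meet_l. apply meet_r. apply meet_r.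
  - apply top_le_eq. rewrite join_comm.
    eapply le_trans. 2: apply distrib_le.
    apply meet_glb.
    + rewrite <- Ha2. apply join_lub. apply join_r. eapply le_trans. 2: apply join_l. apply join_l.
    + rewrite <- Hb2. apply join_lub. apply join_r. eapply le_trans. 2: apply join_l. apply join_r.
Qed.
End CF.

Section Mor.
Variables L L' : Coframe.
Variable f : L -> L'.
Hypothesis Hf : coframe_mor f.

Lemma mor_mono a b : le a b -> le (f a) (f b).
Proof.
  intro H. destruct Hf as [Hi _].
  assert (E : a = meet a b) by (apply le_antisym; [apply meet_glb; auto using le_refl | apply meet_l]).
  rewrite E. unfold meet. rewrite Hi. apply inf_lb. exists b. auto.
Qed.

Lemma mor_meet a b : f (meet a b) = meet (f a) (f b).
Proof.
  destruct Hf as [Hi _]. unfold meet. rewrite Hi. apply inf_ext.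
  intro x; split. intros [y [[-> | ->] ->]]; auto.
  intros [-> | ->]; eauto.
Qed.

Lemma mor_top : f top = top.
Proof.
  destruct Hf as [Hi _]. unfold top. rewrite Hi. apply inf_ext.
  intro x; split. intros [y [[] _]]. intros [].
Qed.

Lemma mor_compl a : complemented a -> complemented (f a).
Proof.
  intros [a' [H1 H2]]. exists (f a'). destruct Hf as [_ [Hb Hj]]. split.
  rewrite <- mor_meet, H1. auto.
  rewrite <- Hj, H2. apply mor_top.
Qed.

Lemma ladj_unit l' : le l' (f (lower_adj f l')).
Proof.
  destruct Hf as [Hi _]. unfold lower_adj. rewrite Hi. apply inf_glb.
  intros y [x [H ->]]. auto.
Qed.

Lemma ladj_counit c : le (lower_adj f (f c)) c.
Proof. apply inf_lb. apply le_refl. Qed.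
End Mor.

Theorem mainTheorem13 (Ob : Coframe -> Prop) (II JJ : Type -> Prop) :
  admissible Ob II JJ ->
  (* F : C^adh -> C^top, (L, nu) |-> (L, C_nu), identity on morphisms *)
  (forall (L : Coframe) (nu : L -> L),
      Ob L -> adherence nu -> topological (C_of nu)) /\
  (forall (L L' : Coframe) (nu : L -> L) (nu' : L' -> L') (f : L -> L'),
      Ob L -> Ob L' -> adherence nu -> adherence nu' ->
      adh_mor II JJ nu nu' f -> top_mor II JJ (C_of nu) (C_of nu') f) /\
  (* G : C^top -> C^adh, (L, C) |-> (L, nu_C), identity on morphisms *)
  (forall (L : Coframe) (C : L -> Prop),
      Ob L -> topological C -> adherence (nu_of C)) /\
  (forall (L L' : Coframe) (C : L -> Prop) (C' : L' -> Prop) (f : L -> L'),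
      Ob L -> Ob L' -> topological C -> topological C' ->
      top_mor II JJ C C' f -> adh_mor II JJ (nu_of C) (nu_of C') f) /\
  (* G -| F : hom-set bijection (the identity on underlying maps) *)
  (forall (L L' : Coframe) (C : L -> Prop) (nu' : L' -> L') (f : L -> L'),
      Ob L -> Ob L' -> topological C -> adherence nu' ->
      (adh_mor II JJ (nu_of C) nu' f <-> top_mor II JJ C (C_of nu') f)).
Proof.
  intros [Hadm _]. split; [|split; [|split; [|split]]].
  - intros L nu _ [Hm [Hb [Hj Hi]]]. unfold C_of. split; [|split; [|split; [|split]]].
    + intros c [H _]; auto.
    + split. apply compl_bot. rewrite Hb. apply le_refl.
    + split. apply compl_top. apply le_top.
    + intros a b [Ca Na] [Cb Nb]. split. apply compl_join; auto.
      rewrite Hj by auto. apply join_mono; auto.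
    + intros a b [Ca Na] [Cb Nb]. split. apply compl_meet; auto.
      apply meet_glb.
      eapply le_trans. apply Hm, meet_l. auto.
      eapply le_trans. apply Hm, meet_r. auto.
  - intros L L' nu nu' f OL OL' Anu Anu' [HC Hadj].
    pose proof (Hadm _ _ f OL OL' HC) as Hf.
    split. auto. intros c [Cc Nc]. split. apply (mor_compl _ _ _ Hf); auto.
    eapply le_trans. apply Hadj. apply (mor_mono _ _ _ Hf).
    eapply le_trans. apply (proj1 Anu). apply ladj_counit. auto.
  - intros L C _ [HC [Cb [Ct [Cj Cm]]]]. unfold nu_of.
    split; [|split; [|split]].
    + intros a b H. apply inf_glb. intros c [Cc Hc]. apply inf_lb. split; auto.
      eapply le_trans; eauto.
    + apply le_bot_eq. apply inf_lb. split; auto. apply le_refl.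
    + intros a b _ _. apply le_antisym.
      * rewrite (@cf_law L). apply inf_glb. intros x [d [[Cd Hd] ->]].
        rewrite (join_comm _ (inf _) d), (@cf_law L). apply inf_glb. intros x [c [[Cc Hc] ->]].
        apply inf_lb. split. auto. rewrite join_comm. apply join_mono; auto.
      * apply join_lub; apply inf_glb; intros c [Cc Hc]; apply inf_lb; split; auto.
        eapply le_trans. apply join_l. eauto.
        eapply le_trans. apply join_r. eauto.
    + intro l. apply le_antisym.
      * apply inf_glb. intros y [a [_ [Ha ->]]]. apply inf_glb. intros c [Cc Hc].
        apply inf_lb. split; auto. eapply le_trans; eauto.
      * apply inf_glb. intros c [Cc Hc]. eapply le_trans.
        apply inf_lb. exists c. split. auto. split. exact Hc. reflexivity.
        apply inf_lb. split; auto. apply le_refl.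
  - intros L L' C C' f OL OL' TC TC' [HCm Hf'].
    pose proof (Hadm _ _ f OL OL' HCm) as Hf.
    split. auto. intro l'. unfold nu_of. rewrite (proj1 Hf). apply inf_glb.
    intros y [c [[Cc Hc] ->]]. apply inf_lb. split. auto.
    eapply le_trans. apply (ladj_unit _ _ _ Hf). apply (mor_mono _ _ _ Hf). auto.
  - intros L L' C nu' f OL OL' TC Anu'. split.
    + intros [HCm Hadj]. pose proof (Hadm _ _ f OL OL' HCm) as Hf.
      split. auto. intros c Cc. split. apply (mor_compl _ _ _ Hf). apply (proj1 TC); auto.
      eapply le_trans. apply Hadj. apply (mor_mono _ _ _ Hf).
      unfold nu_of. apply inf_lb. split. auto. apply ladj_counit.
    + intros [HCm Hf']. pose proof (Hadm _ _ f OL OL' HCm) as Hf.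
      split. auto. intro l'. unfold nu_of. rewrite (proj1 Hf). apply inf_glb.
      intros y [c [[Cc Hc] ->]]. destruct (Hf' c Cc) as [_ N].
      eapply le_trans. 2: exact N. apply (proj1 Anu').
      eapply le_trans. apply (ladj_unit _ _ _ Hf). apply (mor_mono _ _ _ Hf). auto.
Qed.
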